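(* Let $q=2^h$, $m\ge1$, and on $\mathbb{F}_q^{2m}$ let $\langle u,v\rangle=uFv^T$ with $F=\begin{pmatrix}0&I_m\\ I_m&0\end{pmatrix}$, $\vartheta_0(u)=uEu^T$ with $E=\begin{pmatrix}0&I_m\\0&0\end{pmatrix}$, and $\vartheta_a(u)=\vartheta_0(u)+\langle a,u\rangle^2$. Let $W^+=\{a\in\mathbb{F}_q^{2m}:\mathrm{Tr}_{\mathbb{F}_q/\mathbb{F}_2}(\vartheta_0(a))=0\}$, $W^-=\{a\in\mathbb{F}_q^{2m}:\mathrm{Tr}_{\mathbb{F}_q/\mathbb{F}_2}(\vartheta_0(a))=1\}$, and $F=\{(a,b)\in W^\pm\times W^\pm:\vartheta_a(a+b)=0,\ a\ne b\}$. Then the graph $(W^\pm,F)$ is isomorphic to $NO^{\pm}(2m+1,q)$.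
   Context: $NO^{\pm}(2m+1,q)$ ($q$ even): take a non-singular parabolic quadric $Q(2m,q)$ in $PG(2m,q)$ (zero set of a quadratic form on $\mathbb{F}_q^{2m+1}$ of maximal Witt index $m$), whose polar form has a 1-dimensional radical spanning the nucleus $N$. The vertices are the hyperplanes $H$ with $N\notin H$ such that $H\cap Q(2m,q)$ is a non-singular quadric in $H$ of type $\pm1$ (hyperbolic/elliptic); two vertices $H_1,H_2$ are adjacent iff $H_1\cap H_2\cap Q(2m,q)$ is degenerate (singular in $H_1\cap H_2$). *)

(* Defs.v *)
From HB Require Import structures.
From mathcomp Require Import all_boot all_order all_algebra.
Set Implicit Arguments.
Unset Strict Implicit.
Unset Printing Implicit Defensive.
Import GRing.Theory.
Local Open Scope ring_scope.

Section NOGraph.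
Variables (F : finFieldType) (m : nat).

Definition Emx : 'M[F]_(m + m) := block_mx 0 1%:M 0 0.
Definition Fmx : 'M[F]_(m + m) := block_mx 0 1%:M 1%:M 0.
Definition bil (u v : 'rV[F]_(m + m)) : F := (u *m Fmx *m v^T) 0 0.
Definition theta0 (u : 'rV[F]_(m + m)) : F := (u *m Emx *m u^T) 0 0.
Definition theta (a u : 'rV[F]_(m + m)) : F := theta0 u + (bil a u) ^+ 2.
(* absolute trace Tr_{F_q/F_2}(x) = sum_{j<h} x^(2^j), for q = 2^h *)
Definition trF2 (h : nat) (x : F) : F := \sum_(j < h) x ^+ (2 ^ j)%N.
(* W^+ (s = true) and W^- (s = false) *)
Definition Wpm (h : nat) (s : bool) (a : 'rV[F]_(m + m)) : bool :=
  trF2 h (theta0 a) == (if s then 0 else 1).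
Definition Wedge (a b : 'rV[F]_(m + m)) : Prop := theta a (a + b) = 0 /\ a != b.

(* standard non-singular parabolic quadric Q(2m,q) on F^{2m+1}:
   Q(x) = x_0^2 + sum_{i<m} x_{1+i} x_{1+m+i}  (Witt index m) *)
Definition Qf (x : 'rV[F]_(1 + (m + m))) : F :=
  (lsubmx x 0 0) ^+ 2 + theta0 (rsubmx x).
Definition pol (x y : 'rV[F]_(1 + (m + m))) : F := Qf (x + y) - Qf x - Qf y.

Definition hyperplane (H : {set 'rV[F]_(1 + (m + m))}) : Prop :=
  exists c : 'rV[F]_(1 + (m + m)), c != 0 /\ H = [set x | x *m c^T == 0].
(* N not in H: the radical of the polar form (spanned by N) is not in H *)
Definition nucleus_notin (H : {set 'rV[F]_(1 + (m + m))}) : Prop :=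
  exists x, (forall y, pol x y = 0) /\ x \notin H.
Definition nonsing_on (S : {set 'rV[F]_(1 + (m + m))}) : Prop :=
  forall x, x \in S -> Qf x = 0 -> (forall y, y \in S -> pol x y = 0) -> x = 0.
Definition ts_sub (S : {set 'rV[F]_(1 + (m + m))}) (k : nat) : Prop :=
  exists U : 'M[F]_(k, 1 + (m + m)), \rank U = k /\
    forall v : 'rV[F]_(1 + (m + m)), (v <= U)%MS -> v \in S /\ Qf v = 0.
(* S ∩ Q is a non-singular quadric of type +1 (hyperbolic, Witt index m)
   when s = true, of type -1 (elliptic, Witt index m-1) when s = false *)
Definition quadric_type (S : {set 'rV[F]_(1 + (m + m))}) (s : bool) : Prop :=
  nonsing_on S /\ (if s then ts_sub S m else ts_sub S m.-1 /\ ~ ts_sub S m).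
Definition NO_vertex (s : bool) (H : {set 'rV[F]_(1 + (m + m))}) : Prop :=
  [/\ hyperplane H, nucleus_notin H & quadric_type H s].
Definition NO_adj (H1 H2 : {set 'rV[F]_(1 + (m + m))}) : Prop :=
  ~ nonsing_on (H1 :&: H2).

End NOGraph.

(* Main.v *)
From HB Require Import structures.
Require Import Defs.
From mathcomp Require Import all_boot all_order all_algebra all_field.
From mathcomp Require Import ring zify.
Set Implicit Arguments. Unset Strict Implicit. Unset Printing Implicit Defensive.
Import Order.TTheory GRing.Theory Num.Theory.
Local Open Scope ring_scope.

Section Aux.
Variables (F : finFieldType) (m : nat).
Hypothesis ch2 : 2 \in [pchar F].

Lemma two0 : (2%:R : F) = 0. Proof. by case/andP: ch2 => _ /eqP. Qed.
Lemma addxx (x : F) : x + x = 0. Proof. by rewrite -mulr2n -mulr_natr two0 mulr0. Qed.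
Lemma oppF (x : F) : - x = x. Proof. by apply: (addrI x); rewrite addrN addxx. Qed.
Lemma addxxM n p (A : 'M[F]_(n,p)) : A + A = 0.
Proof. by apply/matrixP => i j; rewrite !mxE addxx. Qed.
Lemma oppM n p (A : 'M[F]_(n,p)) : - A = A.
Proof. by apply/matrixP => i j; rewrite !mxE oppF. Qed.
Lemma sqrD (x y : F) : (x + y) ^+ 2 = x ^+ 2 + y ^+ 2.
Proof. by rewrite sqrrD -mulr_natr two0 mulr0 addr0. Qed.

Local Notation V := 'rV[F]_(m + m).

Lemma Fmx_sym : (Fmx F m)^T = Fmx F m.
Proof. by rewrite /Fmx tr_block_mx !trmx0 trmx1. Qed.
Lemma FmxK : Fmx F m *m Fmx F m = 1%:M.
Proof.
by rewrite /Fmx mulmx_block !mulmx0 !mul0mx !mulmx1 !addr0 !add0r -scalar_mx_block.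
Qed.
Lemma EEt : Emx F m + (Emx F m)^T = Fmx F m.
Proof. by rewrite /Emx /Fmx tr_block_mx !trmx0 trmx1 add_block_mx !addr0 !add0r. Qed.

Lemma tr00 n p (A : 'M[F]_(n,p)) i j : A^T i j = A j i.
Proof. by rewrite mxE. Qed.

Lemma entryD n p (A B : 'M[F]_(n,p)) i j : (A + B) i j = A i j + B i j.
Proof. by rewrite mxE. Qed.

Lemma bilC (u v : V) : bil u v = bil v u.
Proof. by rewrite /bil -tr00 !trmx_mul trmxK Fmx_sym mulmxA. Qed.
Lemma bilDl (u v w : V) : bil (u + v) w = bil u w + bil v w.
Proof. by rewrite /bil !mulmxDl mxE. Qed.
Lemma bilDr (u v w : V) : bil w (u + v) = bil w u + bil w v.
Proof. by rewrite /bil linearD /= mulmxDr mxE. Qed.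
Lemma bilZl k (u w : V) : bil (k *: u) w = k * bil u w.
Proof. by rewrite /bil -!scalemxAl mxE. Qed.
Lemma bilZr k (u w : V) : bil w (k *: u) = k * bil w u.
Proof. by rewrite /bil linearZ /= -scalemxAr mxE. Qed.
Lemma bilNl (u w : V) : bil (- u) w = - bil u w.
Proof. by rewrite -scaleN1r bilZl mulN1r. Qed.

Lemma bilNr (u w : V) : bil w (- u) = - bil w u.
Proof. by rewrite -scaleN1r bilZr mulN1r. Qed.

Lemma theta0_tr (u : V) : ((u *m (Emx F m)^T) *m u^T) 0 0 = theta0 u.
Proof. by rewrite /theta0 -tr00 !trmx_mul !trmxK mulmxA. Qed.

Lemma bilxx (u : V) : bil u u = 0.
Proof.
by rewrite /bil -EEt mulmxDr mulmxDl mxE theta0_tr -/(theta0 u) addxx.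
Qed.

Lemma theta0D (u v : V) : theta0 (u + v) = theta0 u + theta0 v + bil u v.
Proof.
rewrite /theta0 /bil -EEt linearD /= !mulmxDl !mulmxDr !entryD.
have -> : (v *m Emx F m *m u^T) 0 0 = (u *m (Emx F m)^T *m v^T) 0 0.
  by rewrite -tr00 !trmx_mul !trmxK mulmxA.
rewrite mulmxDl entryD. by rewrite -!addrA; congr (_ + _); rewrite [RHS]addrC addrA.
Qed.

Lemma theta0Z k (u : V) : theta0 (k *: u) = k ^+ 2 * theta0 u.
Proof. by rewrite /theta0 linearZ /= -!scalemxAl -scalemxAr !mxE expr2 mulrA. Qed.

Lemma thetaD a (u v : V) : theta a (u + v) = theta a u + theta a v + bil u v.
Proof.
rewrite /theta theta0D bilDr sqrD.
by ring.
Qed.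
Lemma thetaZ a k (u : V) : theta a (k *: u) = k ^+ 2 * theta a u.
Proof. by rewrite /theta theta0Z bilZr exprMn mulrDr. Qed.

Lemma theta0_row (x y : 'rV[F]_m) : theta0 (row_mx x y) = (x *m y^T) 0 0.
Proof.
rewrite /theta0 /Emx mul_row_block !mulmx0 !addr0 mulmx1 tr_row_mx mul_row_col.
by rewrite mul0mx add0r.
Qed.


Definition Ga (a : V) : 'M[F]_(m+m, 1+(m+m)) := row_mx (Fmx F m *m a^T) 1%:M.
Definition ca (a : V) : 'rV[F]_(1+(m+m)) := row_mx 1%:M (- (a *m Fmx F m)).
Definition fH (a : V) : {set 'rV[F]_(1+(m+m))} := [set x | x *m (ca a)^T == 0].

Lemma sc00 (k : F) : (k%:M : 'M[F]_1) 0 0 = k.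
Proof. by rewrite mxE eqxx mulr1n. Qed.

Lemma bilE (a u : V) : u *m Fmx F m *m a^T = (bil a u)%:M.
Proof. by rewrite bilC /bil -mx11_scalar. Qed.

Lemma mulGa a (u : V) : u *m Ga a = row_mx (bil a u)%:M u.
Proof. by rewrite /Ga mul_mx_row mulmxA bilE mulmx1. Qed.

Lemma rsubGa a (u : V) : rsubmx (u *m Ga a) = u.
Proof. by rewrite mulGa row_mxKr. Qed.

Lemma QfGa a (u : V) : Qf (u *m Ga a) = theta a u.
Proof. by rewrite /Qf mulGa row_mxKl row_mxKr sc00 /theta addrC. Qed.

Lemma memH a (x : 'rV[F]_(1+(m+m))) : (x \in fH a) = (lsubmx x == (bil a (rsubmx x))%:M).
Proof.
rewrite inE /ca tr_row_mx -{1}[x]hsubmxK mul_row_col trmx1 mulmx1 linearN /=.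
rewrite trmx_mul Fmx_sym mulmxN mulmxA bilE.
by rewrite subr_eq0.
Qed.

Lemma memH_eq a (x : 'rV[F]_(1+(m+m))) : x \in fH a -> x = rsubmx x *m Ga a.
Proof. by rewrite memH mulGa => /eqP <-; rewrite hsubmxK. Qed.

Lemma GaH a (u : V) : u *m Ga a \in fH a.
Proof. by rewrite memH mulGa row_mxKl row_mxKr. Qed.

Lemma polE (x y : 'rV[F]_(1+(m+m))) : pol x y = bil (rsubmx x) (rsubmx y).
Proof.
rewrite /pol /Qf !linearD /= entryD sqrD theta0D.
have e : forall (a b t1 t2 B : F), a + b + (t1 + t2 + B) - (a + t1) - (b + t2) = B.
  by move=> *; ring.
by rewrite e.
Qed.

Lemma bil_nondeg (w : V) : (forall v, bil w v = 0) -> w = 0.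
Proof.
move=> H.
have wF0 : w *m Fmx F m = 0.
  apply/rowP => j; have := H (delta_mx 0 j); rewrite /bil trmx_delta -colE.
  by rewrite [in X in X -> _]mxE => ->; rewrite mxE.
by rewrite -[w]mulmx1 -FmxK mulmxA wF0 mul0mx.
Qed.


Lemma bil0l (w : V) : bil 0 w = 0.
Proof. by rewrite /bil !mul0mx mxE. Qed.
Lemma bil0r (w : V) : bil w 0 = 0.
Proof. by rewrite /bil trmx0 mulmx0 mxE. Qed.

Lemma bil_delta (z : V) i : bil z (delta_mx 0 i) = (z *m Fmx F m) 0 i.
Proof. by rewrite /bil trmx_delta -colE mxE. Qed.

Lemma scM_inj (k l : F) : (k%:M : 'M[F]_1) = l%:M -> k = l.
Proof. by move=> e; rewrite -(sc00 k) e sc00. Qed.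

Lemma nonsing_fH a : nonsing_on (fH a).
Proof.
move=> x xH _ Hp.
have r0 : rsubmx x = 0.
  apply: bil_nondeg => v; rewrite -(rsubGa a v) -polE; apply: Hp; exact: GaH.
by rewrite (memH_eq xH) r0 mul0mx.
Qed.

Definition Nv : 'rV[F]_(1+(m+m)) := row_mx 1%:M 0.

Lemma nucleus_fH a : nucleus_notin (fH a).
Proof.
exists Nv; split.
  by move=> y; rewrite polE /Nv row_mxKr bil0l.
rewrite memH /Nv row_mxKl row_mxKr bil0r; apply/negP => /eqP /scM_inj.
by move/eqP; rewrite oner_eq0.
Qed.

Lemma hyper_fH a : hyperplane (fH a).
Proof.
exists (ca a); split => //.
apply/negP => /eqP e.
have := congr1 (fun M => (lsubmx M) 0 0) e; rewrite /ca row_mxKl sc00 /=.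
by rewrite linear0 mxE; apply/eqP; rewrite oner_eq0.
Qed.

Lemma memHH a b (y : 'rV[F]_(1+(m+m))) :
  (y \in fH a :&: fH b) <-> (y \in fH a /\ bil (a + b) (rsubmx y) = 0).
Proof.
rewrite inE; split.
  case/andP => ya yb; split => //.
  move: ya yb; rewrite !memH => /eqP -> /eqP /scM_inj e.
  by rewrite bilDl e addxx.
case=> ya e; rewrite ya /=; move: ya; rewrite !memH => /eqP ->.
rewrite bilDl in e.
have -> : bil b (rsubmx y) = bil a (rsubmx y).
  by apply: (addrI (bil a (rsubmx y))); rewrite e addxx.
by [].
Qed.

Lemma perp_line (d u : V) : d != 0 ->
  (forall v, bil d v = 0 -> bil u v = 0) -> exists t, u = t *: d.
Proof.
move=> dn0 H.
set dF := d *m Fmx F m.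
have dF0 : dF != 0.
  apply: contra dn0 => /eqP e; apply/eqP.
  by rewrite -[d]mulmx1 -FmxK mulmxA -/dF e mul0mx.
have [j dj] : exists j, dF 0 j != 0.
  case: (pickP (fun j => dF 0 j != 0)) => [j dj|H0]; first by exists j.
  case/negP: dF0; apply/eqP/rowP => j; rewrite [RHS]mxE; apply/eqP.
  by move: (H0 j) => /= /negbFE.
set t := (u *m Fmx F m) 0 j / dF 0 j.
exists t.
have wE : u *m Fmx F m = t *: dF.
  apply/rowP => i; rewrite [RHS]mxE /t.
  have := H (delta_mx 0 i - (dF 0 i / dF 0 j) *: delta_mx 0 j).
  rewrite !bilDr !bilNr !bilZr !bil_delta -/dF.
  rewrite divfK // subrr => /(_ erefl) /eqP; rewrite subr_eq0 => /eqP ->.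
  by rewrite mulrAC [RHS]mulrC mulrA.
clearbody t.
by rewrite -[u]mulmx1 -FmxK mulmxA wE -scalemxAl -mulmxA FmxK mulmx1.
Qed.


Lemma addr0_eq (a b : V) : a + b = 0 -> a = b.
Proof. by move/eqP; rewrite addr_eq0 oppM => /eqP. Qed.

Lemma adj_iff a b : Wedge a b <-> ~ nonsing_on (fH a :&: fH b).
Proof.
split.
  case=> th ab Hn.
  set d := a + b.
  have xin : d *m Ga a \in fH a :&: fH b.
    by apply/memHH; split; [exact: GaH | rewrite rsubGa bilxx].
  have := Hn _ xin; rewrite QfGa => /(_ th) H.
  have : d = 0.
    rewrite -(rsubGa a d) H; last first.
      by move=> y /memHH [_ e]; rewrite polE rsubGa.
    by rewrite linear0.
  by move/addr0_eq => e; rewrite e eqxx in ab.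
move=> Hn.
have ab : a != b.
  by apply/eqP => e; apply: Hn; rewrite e setIid; exact: nonsing_fH.
split => //.
apply/eqP/negPn/negP => th; apply: Hn.
move=> x /memHH [xa e] Qx Hp.
have dn0 : a + b != 0 by apply: contra ab => /eqP /addr0_eq ->.
have [t ut] : exists t, rsubmx x = t *: (a + b).
  apply: perp_line dn0 _ => v ev.
  have yin : v *m Ga a \in fH a :&: fH b by apply/memHH; rewrite rsubGa; split => //; exact: GaH.
  by have := Hp _ yin; rewrite polE rsubGa.
move: Qx; rewrite (memH_eq xa) QfGa ut thetaZ => /eqP; rewrite mulf_eq0 (negbTE th) orbF.
by rewrite expf_eq0 /= => /eqP t0; rewrite t0 scale0r mul0mx.
Qed.

Lemma fH_inj a b : fH a = fH b -> a = b.
Proof.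
move=> e.
have H v : bil (a - b) v = 0.
  have := GaH a v; rewrite e memH mulGa row_mxKl row_mxKr => /eqP /scM_inj.
  by rewrite bilDl bilNl => ->; rewrite subrr.
by apply/eqP; rewrite -subr_eq0; apply/eqP; apply: bil_nondeg.
Qed.

Lemma fH_surj (H : {set 'rV[F]_(1+(m+m))}) :
  hyperplane H -> nucleus_notin H -> exists a, fH a = H.
Proof.
case=> c [cn0 ->] [x [xrad xH]].
have xr : rsubmx x = 0.
  apply: bil_nondeg => v; have := xrad (row_mx 0 v); by rewrite polE row_mxKr.
set c0 := lsubmx c 0 0.
have cl : lsubmx c = c0%:M by rewrite -mx11_scalar.
have c0n : c0 != 0.
  apply: contra xH => /eqP e0; rewrite inE -[x]hsubmxK -[c]hsubmxK xr tr_row_mx mul_row_col.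
  by rewrite cl e0 raddf0 trmx0 mulmx0 mul0mx addr0.
set a := - c0^-1 *: (rsubmx c *m Fmx F m).
exists a.
have ce : c = c0 *: ca a.
  rewrite /ca scale_row_mx -{1}[c]hsubmxK cl scalemx1.
  congr row_mx.
  rewrite /a -scalemxAl -mulmxA FmxK mulmx1 scaleNr opprK scalerA mulfV //.
  by rewrite scale1r.
apply/setP => y; rewrite !inE ce linearZ /= -scalemxAr scaler_eq0 (negbTE c0n).
by [].
Qed.


Lemma sub_rank n p (A : 'M[F]_(n,p)) k : (k <= \rank A)%N ->
  exists U : 'M[F]_(k,p), \rank U = k /\ (U <= A)%MS.
Proof.
move=> kA; exists ((pid_mx k : 'M_(k, \rank A)) *m row_base A); split.
  by rewrite mxrankMfree ?row_base_free // rank_pid_mx.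
by apply: submx_trans (submxMl _ _) _; rewrite eq_row_base.
Qed.

Definition TS a k := exists Vm : 'M[F]_(k, m+m),
  \rank Vm = k /\ forall v : V, (v <= Vm)%MS -> theta a v = 0.

Definition Rm : 'M[F]_(1+(m+m), m+m) := col_mx 0 1%:M.
Lemma mulRm (x : 'rV[F]_(1+(m+m))) : x *m Rm = rsubmx x.
Proof. by rewrite -{1}[x]hsubmxK /Rm mul_row_col mulmx0 add0r mulmx1. Qed.

Lemma Ga_free a : row_free (Ga a).
Proof.
apply/row_freeP; exists Rm.
by rewrite /Ga /Rm mul_row_col mulmx0 add0r mulmx1.
Qed.

Lemma ts_TS a k : ts_sub (fH a) k <-> TS a k.
Proof.
split.
  case=> U [rU HU].
  have UE : U = U *m Rm *m Ga a.
    apply/row_matrixP => i; rewrite !row_mul mulRm.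
    by apply: memH_eq; case: (HU _ (row_sub i U)).
  exists (U *m Rm); split.
    by rewrite -(mxrankMfree _ (Ga_free a)) -UE.
  move=> v vV; rewrite -QfGa.
  have : (v *m Ga a <= U)%MS by rewrite [X in (_ <= X)%MS]UE submxMr.
  by case/HU.
case=> Vm [rV HV]; exists (Vm *m Ga a); split.
  by rewrite mxrankMfree ?Ga_free.
move=> v /submxP [w ->]; rewrite mulmxA; split; first exact: GaH.
by rewrite QfGa; apply: HV; apply: submxMl.
Qed.

Lemma TS_mono a k l : (l <= k)%N -> TS a k -> TS a l.
Proof.
move=> lk [Vm [rV HV]].
have lr : (l <= \rank Vm)%N by rewrite rV.
have [U [rU sU]] := sub_rank lr.
exists U; split => // v vU; apply: HV; exact: submx_trans vU sU.
Qed.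

End Aux.


Section Trace.
Variables (F : finFieldType) (h : nat).
Hypothesis hcard : #|F| = (2 ^ h)%N.

Lemma ch2F : 2 \in [pchar F].
Proof. exact: (card_finPcharP hcard). Qed.

Lemma h_gt0 : (0 < h)%N.
Proof.
case: h hcard => // /eqP; rewrite expn0 => /eqP c1.
have : (1 < #|F|)%N by rewrite (cardD1 0) (cardD1 1) !inE oner_eq0.
by rewrite c1.
Qed.

Local Notation Tr := (@trF2 F h).

Lemma addr0_eqF (a b : F) : a + b = 0 -> a = b.
Proof. by move/eqP; rewrite addr_eq0 oppF ?ch2F // => /eqP. Qed.

Lemma sqrF_sum I (r : seq I) (P : pred I) (f : I -> F) :
  (\sum_(i <- r | P i) f i) ^+ 2 = \sum_(i <- r | P i) f i ^+ 2.
Proof.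
apply: (big_morph (fun x : F => x ^+ 2)); first exact: sqrD ch2F.
by rewrite expr0n.
Qed.

Lemma trD x y : Tr (x + y) = Tr x + Tr y.
Proof.
rewrite /trF2 -big_split /=; apply: eq_bigr => j _.
elim: (nat_of_ord j) => [|n IH]; first by rewrite !expn0 !expr1.
by rewrite expnS mulnC exprM IH sqrD ?ch2F // -!exprM.
Qed.

Lemma tr_sq x : Tr (x ^+ 2) = Tr x.
Proof.
rewrite /trF2; have := h_gt0; case: h hcard => // n hc _.
rewrite big_ord_recr big_ord_recl /= expn0 expr1 -exprM -expnS -hc expf_card addrC.
by congr (_ + _); apply: eq_bigr => j _; rewrite -exprM -expnS.
Qed.

Lemma tr01 x : Tr x = 0 \/ Tr x = 1.
Proof.
have e : Tr x ^+ 2 = Tr x.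
  rewrite -[in RHS](tr_sq x) /trF2 sqrF_sum; apply: eq_bigr => j _.
  by rewrite -!exprM mulnC.
have : Tr x * (Tr x - 1) = 0 by rewrite mulrBr mulr1 -expr2 e subrr.
move/eqP; rewrite mulf_eq0 subr_eq0 => /orP [] /eqP; by [left | right].
Qed.

Lemma trP_size n : size (\sum_(j < n.+1) 'X^(2 ^ j) : {poly F}) = (2 ^ n).+1.
Proof.
elim: n => [|n IH]; first by rewrite big_ord1 expn0 size_polyXn.
rewrite big_ord_recr /= addrC size_polyDl size_polyXn // IH ltnS.
by rewrite expnS; have := expn_gt0 2 n; lia.
Qed.

Lemma card_tr0 : (#|[set x : F | Tr x == 0%R]| <= 2 ^ h.-1)%N.
Proof.
have [n hn] : exists n, h = n.+1 by have := h_gt0; case: (h) => // n _; exists n.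
rewrite /trF2 hn /=.
set P := (\sum_(j < n.+1) 'X^(2 ^ j) : {poly F}).
have sP := trP_size n.
have Pn0 : P != 0 by rewrite -size_poly_eq0 sP.
have := max_poly_roots Pn0 (rs := enum [set x : F | trF2 n.+1 x == 0]).
rewrite enum_uniq cardE sP ltnS; apply => //.
apply/allP => x; rewrite mem_enum inE /root /P horner_sum.
by under eq_bigr do rewrite hornerXn.
Qed.

Definition wp (s : F) := s ^+ 2 + s.

Lemma wp_eq s z : wp s = wp z -> s = z \/ s = z + 1.
Proof.
move=> e.
have : (s + z) * (s + z + 1) = 0.
  rewrite mulrDr mulr1 -expr2 sqrD ?ch2F //.
  have : wp s + wp z = 0 by rewrite e addxx ?ch2F.
  by rewrite /wp => <-; ring.
move/eqP; rewrite mulf_eq0 => /orP [] /eqP H.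
  by left; apply: addr0_eqF H.
by right; apply: addr0_eqF; rewrite addrA.
Qed.


Lemma tr_wp s : Tr (wp s) = 0.
Proof. by rewrite /wp trD tr_sq addxx ?ch2F. Qed.

Lemma card_img : (#|F| <= 2 * #|[set wp s | s : F]|)%N.
Proof.
set img := [set wp s | s : F].
pose r (y : F) := odflt 0 [pick x | wp x == y].
have rP s : wp (r (wp s)) = wp s.
  rewrite /r; case: pickP => [x /eqP //|/(_ s)]; by rewrite eqxx.
pose k s := (wp s, s == r (wp s)).
have kinj : injective k.
  move=> s z [e1 e2]; rewrite -e1 in e2.
  set rho := r (wp s) in e2.
  have Hs : wp s = wp rho by rewrite rP.
  have Hz : wp z = wp rho by rewrite /rho rP e1.
  case: (boolP (s == rho)) e2 => [/eqP -> /esym/eqP -> // | sn /esym/negbT zn].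
  case: (wp_eq Hs) => [es|->]; first by rewrite es eqxx in sn.
  by case: (wp_eq Hz) => [ez|->]; first by rewrite ez eqxx in zn.
have : (#|[set k s | s : F]| <= #|setX img [set: bool]|)%N.
  apply: subset_leq_card; apply/subsetP => p /imsetP [s _ ->].
  by rewrite inE /= inE; apply/andP; split => //; apply/imsetP; exists s.
by rewrite card_imset // cardsX cardsT card_bool mulnC.
Qed.


Lemma hpow : (#|F| = 2 * 2 ^ h.-1)%N.
Proof. by rewrite hcard -expnS prednK // h_gt0. Qed.

Lemma wp_surj c : Tr c = 0 -> exists s, wp s = c.
Proof.
move=> tc.
have cI := card_img; have cZ := card_tr0; rewrite hpow in cI.
set img := [set wp s | s : F].
set Z := [set x : F | Tr x == 0%R].
have sub : img \subset Z by apply/subsetP => y /imsetP [s _ ->]; rewrite inE tr_wp.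
have : img == Z by rewrite eqEcard sub /=; apply: leq_trans cZ _; rewrite -(leq_pmul2l (isT : (0 < 2)%N)).
move/eqP => e.
have : c \in Z by rewrite inE tc.
by rewrite -e => /imsetP [s _ ->]; exists s.
Qed.

Lemma tr1_ex : exists d, Tr d = 1.
Proof.
set Z := [set x : F | Tr x == 0%R].
have : ~~ ([set: F] \subset Z).
  apply/negP => /subset_leq_card; rewrite cardsT hpow.
  move=> H; have := leq_trans H card_tr0; have := expn_gt0 2 h.-1; lia.
case/subsetPn => d _; rewrite inE => dn; exists d.
by case: (tr01 d) => // e; rewrite e eqxx in dn.
Qed.

End Trace.

Section TypeA.
Variables (F : finFieldType) (m h : nat).
Hypothesis hcard : #|F| = (2 ^ h)%N.
Let ch2 := ch2F hcard.
Local Notation V := 'rV[F]_(m + m).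

Definition Phi (a : V) (t : F) : 'M[F]_(m+m) := 1%:M + t *: (Fmx F m *m a^T *m a).

Lemma mulPhi a t (u : V) : u *m Phi a t = u + (t * bil a u) *: a.
Proof.
rewrite /Phi mulmxDr mulmx1 -scalemxAr !mulmxA bilE mul_scalar_mx scalerA.
by rewrite mulrC.
Qed.

Lemma PhiK a t (u : V) : u *m Phi a t *m Phi a t = u.
Proof.
rewrite !mulPhi bilDr bilZr (bilxx ch2) mulr0 addr0.
by rewrite -addrA (addxxM ch2) addr0.
Qed.

Lemma theta0_Phi a t (u : V) : theta0 a * t ^+ 2 + t = 1 ->
  theta0 (u *m Phi a t) = theta a u.
Proof.
move=> et; rewrite mulPhi theta0D theta0Z bilZr /theta.
rewrite -addrA; congr (_ + _); rewrite (bilC u a).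
have -> : (t * bil a u) ^+ 2 * theta0 a + t * bil a u * bil a u
   = bil a u ^+ 2 * (theta0 a * t ^+ 2 + t) by ring.
by rewrite et mulr1.
Qed.

Definition P0 : 'M[F]_(m, m+m) := row_mx 1%:M 0.

Lemma P0_free : row_free P0.
Proof. by apply/row_freeP; exists (col_mx 1%:M 0); rewrite mul_row_col mulmx1 mulmx0 addr0. Qed.

Lemma tsA (a : V) : trF2 h (theta0 a) = 0 -> TS a m.
Proof.
move=> tr0.
have [t et] : exists t, theta0 a * t ^+ 2 + t = 1.
  have [c0|cn0] := eqVneq (theta0 a) 0.
    by exists 1; rewrite c0 mul0r add0r.
  have [s es] := wp_surj hcard tr0.
  exists (s / theta0 a).
  by rewrite -es /wp in cn0 *; field.
have PP : Phi a t *m Phi a t = 1%:M.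
  rewrite -[LHS]mul1mx mulmxA; apply/row_matrixP => i.
  by rewrite !row_mul PhiK.
exists (P0 *m Phi a t); split.
  rewrite mxrankMfree; first by have := P0_free; rewrite /row_free => /eqP.
  by apply/row_freeP; exists (Phi a t).
move=> v /submxP [w ->].
rewrite -(theta0_Phi _ et) mulmxA PhiK /P0 mul_mx_row mulmx1 mulmx0.
by rewrite theta0_row trmx0 mulmx0 mxE.
Qed.

End TypeA.

Section TypeB.
Variables (F : finFieldType) (m h : nat).
Hypothesis hcard : #|F| = (2 ^ h)%N.
Let ch2 := ch2F hcard.
Local Notation V := 'rV[F]_(m + m).

Lemma theta0_P0 (x : 'rV[F]_m) : theta0 (x *m P0 F m) = 0.
Proof. by rewrite /P0 mul_mx_row mulmx1 mulmx0 theta0_row trmx0 mulmx0 mxE. Qed.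

Lemma TS_rank (a : V) n (Vm : 'M[F]_(n, m+m)) :
  (forall v, (v <= Vm)%MS -> theta a v = 0) -> TS a (\rank Vm).
Proof.
move=> HV; have [U [rU sU]] := sub_rank (leqnn (\rank Vm)).
by exists U; split => // v vU; apply: HV; exact: submx_trans vU sU.
Qed.

Lemma tsB (a : V) : TS a m.-1.
Proof.
set col := P0 F m *m Fmx F m *m a^T.
set K := kermx col.
have HK : TS a (\rank (K *m P0 F m)).
  apply: TS_rank => v /submxP [w ->].
  rewrite /theta mulmxA theta0_P0 add0r bilC /bil.
  have -> : w *m K *m P0 F m *m Fmx F m *m a^T = w *m (K *m col).
    by rewrite /col !mulmxA.
  by rewrite mulmx_ker mulmx0 mxE expr0n.
apply: TS_mono HK.
rewrite mxrankMfree ?P0_free // mxrank_ker.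
have := rank_leq_col col; lia.
Qed.

End TypeB.

Section TypeC.
Variables (F : finFieldType) (m h : nat).
Hypothesis hcard : #|F| = (2 ^ h)%N.
Let ch2 := ch2F hcard.
Local Notation V := 'rV[F]_(m + m).
Local Notation Tr := (@trF2 F h).

Definition chi (x : F) : int := if Tr x == 0 then 1 else -1.

Lemma chiD x y : chi (x + y) = chi x * chi y.
Proof.
rewrite /chi trD //.
case: (tr01 hcard x) => ->; case: (tr01 hcard y) => ->;
  rewrite ?addr0 ?add0r ?eqxx ?oner_eq0 ?(addxx ch2) ?eqxx //.
Qed.

Lemma tr0 : Tr 0 = 0.
Proof. by apply: (addIr (Tr 0)); rewrite -trD // !addr0 add0r. Qed.

Lemma chi0 : chi 0 = 1.
Proof. by rewrite /chi tr0 eqxx. Qed.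

Lemma chi_sq x : chi (x ^+ 2) = chi x.
Proof. by rewrite /chi tr_sq. Qed.

Definition Ssum (Q : V -> F) : int := \sum_(v : V) chi (Q v).

Lemma S_shift (a : V) : chi (theta0 a) * Ssum (theta a) = Ssum (@theta0 F m).
Proof.
rewrite /Ssum [RHS](reindex_inj (addIr a)) /= mulr_sumr; apply: eq_bigr => v _.
by rewrite /theta theta0D !chiD chi_sq (bilC a v); ring.
Qed.

Lemma entryT n1 n2 p (A : 'M[F]_(n1, p)) (B : 'M[F]_(n2, p)) i j :
  (A *m B^T) i j = (row i A *m (row j B)^T) 0 0.
Proof. by rewrite !mxE; apply: eq_bigr => k _; rewrite !mxE. Qed.

Section Spos.
Variables (Q : V -> F) (Vm : 'M[F]_(m, m + m)).
Hypothesis QD : forall u v, Q (u + v) = Q u + Q v + bil u v.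
Hypothesis rV : \rank Vm = m.
Hypothesis HV : forall v, (v <= Vm)%MS -> Q v = 0.

Lemma iso_W u w : (u <= Vm)%MS -> (w <= Vm)%MS -> bil u w = 0.
Proof.
move=> uV wV; have := QD u w; rewrite !HV ?addmx_sub // !add0r.
by move/esym.
Qed.

Lemma lagr (v : V) : (forall w, (w <= Vm)%MS -> bil v w = 0) -> (v <= Vm)%MS.
Proof.
move=> Hv.
set K := kermx (Fmx F m *m Vm^T).
have sVK : (Vm <= K)%MS.
  apply/sub_kermxP; apply/matrixP => i j; rewrite mulmxA entryT row_mul [RHS]mxE.
  exact: iso_W (row_sub i Vm) (row_sub j Vm).
have rK : \rank K = m.
  rewrite mxrank_ker -mxrank_tr trmx_mul trmxK Fmx_sym mxrankMfree ?rV; first lia.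
  by apply/row_freeP; exists (Fmx F m); rewrite FmxK.
have KV : (K <= Vm)%MS.
  by have := (mxrank_leqif_sup sVK).2; rewrite rV rK eqxx.
apply: submx_trans KV; apply/sub_kermxP; apply/rowP => j.
rewrite mulmxA entryT [RHS]mxE.
by rewrite row_id; exact: Hv (row_sub j Vm).
Qed.

Lemma subB (x y : V) : (x <= Vm)%MS -> (y <= Vm)%MS -> (x - y <= Vm)%MS.
Proof. by move=> xV yV; rewrite addmx_sub // -scaleN1r scalemx_sub. Qed.

Lemma S_pos : 0 < Ssum Q.
Proof.
set W := [set w : V | (w <= Vm)%MS].
pose Wp := [set v : V | [forall w in W, bil v w == 0]].
have [d trd] := tr1_ex hcard.
have chid : chi d = -1 by rewrite /chi trd oner_eq0.
have inner v : \sum_(w in W) chi (bil v w) = if v \in Wp then (#|W|%:R : int) else 0.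
  rewrite inE; case: (boolP [forall w in W, bil v w == 0]) => [/forallP Hp | /forallPn [w0]].
    transitivity (\sum_(w in W) (1 : int)); last by rewrite sumr_const.
    apply: eq_bigr => w wW; move/implyP: (Hp w) => /(_ wW) /eqP ->; exact: chi0.
  rewrite negb_imply => /andP [w0W bn0].
  set s := \sum_(w in W) _.
  set w1 := (d / bil v w0) *: w0.
  have w1V : (w1 <= Vm)%MS by rewrite scalemx_sub //; move: w0W; rewrite inE.
  have bw1 : bil v w1 = d by rewrite bilZr divfK.
  have : s = - s.
    rewrite /s [LHS](reindex_inj (addIr w1)) /= -sumrN.
    apply: eq_big => w.
      rewrite !inE; apply/idP/idP => H; last exact: addmx_sub.
      by rewrite -[w](addrK w1); apply: subB.
    by move=> _; rewrite bilDr chiD bw1 chid mulrN1.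
  by move=> e; lia.
have step w : w \in W -> Ssum Q = \sum_v chi (Q v) * chi (bil v w).
  rewrite inE => wV; rewrite /Ssum (reindex_inj (addIr w)) /=; apply: eq_bigr => v _.
  by rewrite QD (HV wV) addr0 chiD.
have main : Ssum Q *+ #|W| = (#|W|%:R : int) *+ #|Wp|.
  rewrite -sumr_const (eq_bigr _ step) exchange_big /=.
  transitivity (\sum_v (if v \in Wp then (#|W|%:R:int) else 0)).
    apply: eq_bigr => v _; rewrite -mulr_sumr inner; case: ifP => vWp; last by rewrite mulr0.
    have vV : (v <= Vm)%MS.
      apply: lagr => w wV; move: vWp; rewrite inE => /forallP/(_ w).
      by rewrite inE wV => /eqP.
    by rewrite HV // chi0 mul1r.
  by rewrite -big_mkcond sumr_const.
have W0 : (0 < #|W|)%N by apply/card_gt0P; exists 0; rewrite inE sub0mx.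
have Wp0 : (0 < #|Wp|)%N.
  apply/card_gt0P; exists 0; rewrite inE; apply/forallP => w.
  by rewrite bil0l eqxx implybT.
by rewrite -(pmulrn_lgt0 _ W0) main pmulrn_lgt0 // ltr0n.
Qed.

End Spos.

Lemma tsC (a : V) : Tr (theta0 a) = 1 -> ~ TS a m.
Proof.
move=> t1 [Vm [rV HV]].
have S1 := S_pos (thetaD ch2 a) rV HV.
have rP : \rank (P0 F m) = m by apply/eqP; exact: P0_free.
have S0 : 0 < Ssum (@theta0 F m).
  apply: (S_pos (@theta0D F m) rP) => v /submxP [w ->]; exact: theta0_P0.
move: (S_shift a); rewrite /chi t1 oner_eq0 mulN1r => e.
by move: S0; rewrite -e oppr_gt0 => /lt_trans /(_ S1); rewrite ltxx.
Qed.

End TypeC.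

Theorem lemma3p4 (F : finFieldType) (h m : nat) (s : bool) :
  #|F| = (2 ^ h)%N -> (0 < m)%N ->
  exists f : 'rV[F]_(m + m) -> {set 'rV[F]_(1 + (m + m))},
    [/\ forall a, Wpm h s a -> NO_vertex s (f a),
        forall a b, Wpm h s a -> Wpm h s b -> f a = f b -> a = b,
        forall H, NO_vertex s H -> exists2 a, Wpm h s a & f a = H
      & forall a b, Wpm h s a -> Wpm h s b ->
          (Wedge a b <-> NO_adj (f a) (f b))].
Proof.
move=> hc _; have ch2 := ch2F hc.
have typ1 (a : 'rV[F]_(m + m)) : Wpm h s a -> quadric_type (fH a) s.
  rewrite /Wpm => /eqP tr; split; first exact: (@nonsing_fH F m ch2 a).
  case: s tr => tr; first by apply/ts_TS; exact: (@tsA F m h hc a tr).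
  split; first by apply/ts_TS; exact: (@tsB F m h hc a).
  by move/ts_TS; exact: (@tsC F m h hc a tr).
have typ2 (a : 'rV[F]_(m + m)) : quadric_type (fH a) s -> Wpm h s a.
  clear typ1; rewrite /Wpm; case=> _; case: s.
    move/ts_TS => T; case: (tr01 hc (theta0 a)) => tr; first by rewrite tr.
    by case: (@tsC F m h hc a tr T).
  case=> _ NT; case: (tr01 hc (theta0 a)) => tr; last by rewrite tr.
  by case: NT; apply/ts_TS; exact: (@tsA F m h hc a tr).
exists (@fH F m); split.
- move=> a Wa; split; [exact: (@hyper_fH F m a) | exact: (@nucleus_fH F m ch2 a) | exact: typ1].
- by move=> a b _ _; apply: fH_inj.
- move=> H [hyp nuc qt]; have [a Ha] := fH_surj ch2 hyp nuc.
  by exists a => //; apply: typ2; rewrite Ha.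
- by move=> a b _ _; exact: (@adj_iff F m ch2 a b).
Qed.
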